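(* Assume (A1)–(A3) and $m_1<0$. Then $V_1=\sum_{i\ge0}\pi_1(i)\mathbb E_{(i,0)}(Y_1(1))$ is well defined, and for every $(k,\ell)\in\mathbb N\times\mathbb Z$ the random variable $Y_1(T_1(k))$ is $\mathbb P_{(k,\ell)}$-integrable with \[\mathbb E_{(k,\ell)}\bigl(Y_1(T_1(k))\bigr)=\ell+\frac{V_1}{\pi_1(k)},\] where $T_1(k)=\inf\{n>0: X_1(n)=k\}$.
   Context: Let $\mathbb N=\{0,1,2,\dots\}$ and fix an integer $k_0\ge1$. Let $\mu$, $\mu'_j$ ($0\le j<k_0$), $\mu''_i$ ($0\le i<k_0$), $\mu_{ij}$ ($0\le i,j<k_0$) be probability measures on $\mathbb Z^2$. The random walk $Z=(X(n),Y(n))$ on $\mathbb N^2$ has transition probabilities $p((i,j)\to(i',j'))$ equal to $\mu(i'-i,j'-j)$ if $i,j\ge k_0$; $\mu'_j(i'-i,j'-j)$ if $i\ge k_0$, $0\le j<k_0$; $\mu''_i(i'-i,j'-j)$ if $0\le i<k_0$, $j\ge k_0$; $\mu_{ij}(i'-i,j'-j)$ if $0\le i,j<k_0$. Assumptions: (A1) $\mu(a,b)=0$ if $a<-k_0$ or $b<-k_0$; $\mu'_j(a,b)=0$ if $a<-k_0$ or $b<-j$; $\mu''_i(a,b)=0$ if $b<-k_0$ or $a<-i$; $\mu_{ij}(a,b)=0$ if $a<-i$ or $b<-j$. (A2) There are $\delta,\gamma,C>0$ with $\sup_{(i,j)\in\mathbb N^2}\mathbb E_{(i,j)}[\exp(\delta(X(1)-i)+\gamma(Y(1)-j))]\le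 C$. (A3) $Z_0,Z_1,Z_2,Z$ are irreducible on their state spaces. $Z_0$: random walk on $\mathbb Z^2$ with increment law $\mu$; $m_1=\sum a\mu(a,b)$. $Z_1=(X_1,Y_1)$: Markov chain on $\mathbb N\times\mathbb Z$ with transitions $\mu(i'-i,j'-j)$ from $(i,j)$ if $i\ge k_0$ and $\mu''_i(i'-i,j'-j)$ if $0\le i<k_0$; $\mathbb P_{(k,\ell)},\mathbb E_{(k,\ell)}$ refer to it started at $(k,\ell)$. $Z_2$: Markov chain on $\mathbb Z\times\mathbb N$ with transitions $\mu$ if $j\ge k_0$ and $\mu'_j$ if $0\le j<k_0$. The first coordinate $X_1$ is a Markov chain on $\mathbb N$; when $m_1<0$ it is positive recurrent with invariant distribution $\pi_1$. *)

(* Defs.v *)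
(* Discrete Markov chains are encoded through their
   one-step laws; path probabilities are computed with [esum] (sums of
   nonnegative extended reals over arbitrary index sets). *)
From HB Require Import structures.
From mathcomp Require Import all_boot all_order all_algebra.
From mathcomp Require Import all_classical all_reals all_analysis.

Set Implicit Arguments.
Unset Strict Implicit.
Unset Printing Implicit Defensive.

Import Order.TTheory GRing.Theory Num.Theory.
Local Open Scope classical_set_scope.
Local Open Scope ring_scope.

Section Defs.
Variable R : realType.

Definition is_distr (T : choiceType) (m : T -> R) : Prop :=
  (forall x, 0 <= m x) /\ (\esum_(x in [set: T]) (m x)%:E = 1)%E.

Definition dsum (T : choiceType) (f : T -> R) : \bar R :=
  (\esum_(x in [set: T]) (Num.max (f x) 0)%:E -
   \esum_(x in [set: T]) (Num.max (- f x) 0)%:E)%E.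

(* Absolute moment (integrability is: this is < +oo). *)
Definition dabs (T : choiceType) (f : T -> R) : \bar R :=
  (\esum_(x in [set: T]) `|f x|%:E)%E.

Definition irreducible (S : eqType) (P : S -> S -> R) : Prop :=
  forall x y : S, exists s : seq S,
    path (fun a b => 0 < P a b) x s /\ last x s = y.

Variables (k0 : nat)
  (mu : int * int -> R)
  (mu' : nat -> int * int -> R)
  (mu'' : nat -> int * int -> R)
  (muij : nat -> nat -> int * int -> R).

(* increment law of Z at (i,j) in N^2 *)
Definition lawZ (i j : nat) : int * int -> R :=
  if (k0 <= i)%N then (if (k0 <= j)%N then mu else mu' j)
  else (if (k0 <= j)%N then mu'' i else muij i j).

(* increment law of Z_1 at (i, j) in N x Z : depends only on i *)
Definition law1 (i : nat) : int * int -> R :=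
  if (k0 <= i)%N then mu else mu'' i.

(* increment law of Z_2 at (i, j) in Z x N : depends only on j *)
Definition law2 (j : nat) : int * int -> R :=
  if (k0 <= j)%N then mu else mu' j.

Definition kernel0 (x y : int * int) : R := mu (y.1 - x.1, y.2 - x.2).
Definition kernel1 (x y : nat * int) : R :=
  law1 x.1 (y.1%:Z - x.1%:Z, y.2 - x.2).
Definition kernel2 (x y : int * nat) : R :=
  law2 x.2 (y.1 - x.1, y.2%:Z - x.2%:Z).
Definition kernelZ (x y : nat * nat) : R :=
  lawZ x.1 x.2 (y.1%:Z - x.1%:Z, y.2%:Z - x.2%:Z).

(* transition kernel of the first coordinate X_1 of Z_1 *)
Definition kernelX1 (i i' : nat) : \bar R :=
  (\esum_(b in [set: int]) (law1 i (i'%:Z - i%:Z, b))%:E)%E.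

Definition invariant_X1 (pi1 : nat -> R) : Prop :=
  is_distr pi1 /\
  forall i' : nat,
    ((pi1 i')%:E = \esum_(i in [set: nat]) (pi1 i)%:E * kernelX1 i i')%E.

Definition m1 : \bar R := dsum (fun ab : int * int => ab.1%:~R * mu ab).

(* E_{(i,0)}(Y_1(1)) and E_{(i,0)}|Y_1(1)| *)
Definition EY1 (i : nat) : \bar R := dsum (fun ab : int * int => ab.2%:~R * law1 i ab).
Definition EabsY1 (i : nat) : \bar R := dabs (fun ab : int * int => ab.2%:~R * law1 i ab).

Definition V1 (pi1 : nat -> R) : R := fine (dsum (fun i : nat => pi1 i * fine (EY1 i))).

(* Taboo probabilities for Z_1 started at z0, for the return time T_1(k):
   taboo k z0 n x = P_{z0}( X_1(m) <> k for 0 < m < n, Z_1(n) = x ). *)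
Fixpoint taboo (k : nat) (z0 : nat * int) (n : nat) : nat * int -> \bar R :=
  match n with
  | 0 => fun x => if x == z0 then 1%E else 0%E
  | m.+1 => fun x =>
      (\esum_(y in [set y : nat * int | m = 0%N \/ y.1 <> k])
          taboo k z0 m y * (kernel1 y x)%:E)%E
  end.

(* the event {T_1(k) = n, Z_1(n) = x}, n > 0 *)
Definition hit_set (k : nat) : set (nat * (nat * int)) :=
  [set nx | (0 < nx.1)%N /\ nx.2.1 = k].

Definition P_T1_finite (k : nat) (l : int) : \bar R :=
  (\esum_(nx in hit_set k) taboo k (k, l) nx.1 nx.2)%E.

(* E_{(k,l)} |Y_1(T_1(k))|  (on {T_1(k) < oo}) *)
Definition EabsY_T1 (k : nat) (l : int) : \bar R :=
  (\esum_(nx in hit_set k) taboo k (k, l) nx.1 nx.2 * `|nx.2.2%:~R : R|%:E)%E.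

Definition EY_T1 (k : nat) (l : int) : \bar R :=
  (\esum_(nx in hit_set k) taboo k (k, l) nx.1 nx.2 * (Num.max (nx.2.2%:~R : R) 0)%:E -
   \esum_(nx in hit_set k) taboo k (k, l) nx.1 nx.2 * (Num.max (- (nx.2.2%:~R : R)) 0)%:E)%E.

End Defs.

(* Main.v *)
Require Import Defs.
From HB Require Import structures.
From mathcomp Require Import all_boot all_order all_algebra.
From mathcomp Require Import all_classical all_reals all_analysis.
From mathcomp Require Import zify lra ring.
Import Order.TTheory GRing.Theory Num.Theory.

Module M_A.
Set Implicit Arguments.
Unset Strict Implicit.
Unset Printing Implicit Defensive.
Import Order.TTheory GRing.Theory Num.Theory.
Local Open Scope classical_set_scope.
Local Open Scope ring_scope.
Local Open Scope ereal_scope.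

Section esum_extra.
Context {R : realType}.

Lemma esum_ge1 (T : choiceType) (I : set T) (a : T -> \bar R) j :
  (forall i, I i -> 0 <= a i) -> I j -> a j <= \esum_(i in I) a i.
Proof.
move=> a0 Ij; apply: esum_ge; exists [set j].
  by split; [exact: finite_set1| move=> x ->].
by rewrite fsbig_set1.
Qed.

Lemma esumZl_fin (T : choiceType) (I : set T) (r : R) (a : T -> \bar R) :
  (0 <= r)%R -> (forall i, 0 <= a i) ->
  \esum_(i in I) (r%:E * a i) = r%:E * \esum_(i in I) a i.
Proof.
move=> r0 a0; rewrite /esum -ereal_supZl//; last first.
  by apply/set0P; exists 0; exists set0; [exact: fsets_set0| rewrite fsbig_set0].
congr ereal_sup; apply/seteqP; split => x /=.
  move=> [A [finA AI] <-]; exists (\sum_(x \in A) a x); first by exists A.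
  by rewrite ge0_mule_fsumr.
move=> [y [A [finA AI] <-] <-]; exists A => //.
by rewrite ge0_mule_fsumr.
Qed.

Lemma esumZl (T : choiceType) (I : set T) (c : \bar R) (a : T -> \bar R) :
  0 <= c -> (forall i, 0 <= a i) ->
  \esum_(i in I) (c * a i) = c * \esum_(i in I) a i.
Proof.
move=> c0 a0; case: c c0 => [r|_|//]; first by rewrite lee_fin => r0; rewrite esumZl_fin.
have [allz|] := pselect (forall i, I i -> a i = 0).
  rewrite (esum1 allz) mule0; apply: esum1 => i Ii; by rewrite allz ?mule0.
move=> /existsNP[j /not_implyP[Ij aj]].
have ajp : 0 < a j by rewrite lt_neqAle eq_sym; apply/andP; split; [apply/eqP|exact: a0].
have : +oo * a j <= \esum_(i in I) (+oo * a i).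
  by apply: (@esum_ge1 _ I (fun i => +oo * a i) j) => // i Ii; apply: mule_ge0.
rewrite gt0_mulye// leye_eq => /eqP ->.
rewrite gt0_mulye//; apply: (lt_le_trans ajp); exact: esum_ge1.
Qed.

Lemma esumZr (T : choiceType) (I : set T) (c : \bar R) (a : T -> \bar R) :
  0 <= c -> (forall i, 0 <= a i) ->
  \esum_(i in I) (a i * c) = (\esum_(i in I) a i) * c.
Proof.
move=> c0 a0; rewrite muleC -esumZl//; apply: eq_esum => i _; exact: muleC.
Qed.

Lemma esum_prod (T1 T2 : choiceType) (a : T1 * T2 -> \bar R) :
  (forall z, 0 <= a z) ->
  \esum_(z in [set: T1 * T2]) a z =
  \esum_(i in [set: T1]) \esum_(j in [set: T2]) a (i, j).
Proof.
move=> a0; rewrite (@esum_esum _ _ _ setT (fun _ => setT) (fun i j => a (i, j))) //.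
have -> : [set: T1] `*`` (fun=> [set: T2]) = [set: T1 * T2].
  by apply/seteqP; split => // [[x y]].
by apply: eq_esum => -[].
Qed.

Lemma esum_swap (T1 T2 : choiceType) (a : T1 -> T2 -> \bar R) :
  (forall i j, 0 <= a i j) ->
  \esum_(i in [set: T1]) \esum_(j in [set: T2]) a i j =
  \esum_(j in [set: T2]) \esum_(i in [set: T1]) a i j.
Proof.
move=> a0; rewrite -(esum_prod (a:=fun z => a z.1 z.2))//.
rewrite -(esum_prod (a:=fun z => a z.2 z.1))//.
rewrite (reindex_esum [set: T2 * T1] [set: T1 * T2] (fun z => (z.2, z.1)))//.
split.
- by move=> z.
- by move=> [x1 y1] [x2 y2] _ _ [-> ->].
- by move=> [x y] _; exists (y, x).
Qed.

Lemma esum_nat_shift (a : nat -> \bar R) :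
  (forall n, 0 <= a n) ->
  \esum_(n in [set: nat]) a n = a 0%N + \esum_(n in [set: nat]) a n.+1.
Proof.
move=> a0; rewrite (esumID [set 0%N])//; congr (_ + _).
  by rewrite setTI esum_set1.
rewrite setTI (reindex_esum [set: nat] (~` [set 0%N]) S)//; split.
- by move=> n _ /=.
- by move=> x y _ _ [].
- by move=> [|n] //= _; exists n.
Qed.

Lemma esum_sup (T : choiceType) (I : set T) (f : nat -> T -> \bar R) :
  (forall n i, 0 <= f n i) -> (forall i, nondecreasing_seq (f ^~ i)) ->
  \esum_(i in I) ereal_sup (range (f ^~ i)) =
  ereal_sup (range (fun n => \esum_(i in I) f n i)).
Proof.
move=> f0 fnd; apply/eqP; rewrite eq_le; apply/andP; split; last first.
  apply: ub_ereal_sup => _ [n _ <-]; apply: le_esum => i Ii.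
  by apply: ereal_sup_ubound; exists n.
apply: ub_ereal_sup => _ [X [finX XI] <-].
have cv : (fun n => \sum_(i \in X) f n i) @ \oo --> \sum_(i \in X) ereal_sup (range (f ^~ i)).
  rewrite fsbig_finite//=.
  under eq_fun do rewrite fsbig_finite//=.
  apply: cvg_nnesum => [j _|j _]; first exact: nearW.
  exact: ereal_nondecreasing_cvgn.
apply: (cvge_le _ cv); apply: nearW => n.
apply: (@le_trans _ _ (\esum_(i in I) f n i)); first by apply: esum_ge; exists X.
by apply: ereal_sup_ubound; exists n.
Qed.

Lemma esum_delta (T : choiceType) (t : T) (c : \bar R) : 0 <= c ->
  \esum_(x in [set: T]) (if x == t then c else 0) = c.
Proof.
move=> c0; rewrite (esumID [set t]); last by move=> x _; case: ifP.
rewrite setTI esum_set1 ?eqxx// esum1 ?adde0// => x [_ /= /eqP /negPf ->] //.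
Qed.

End esum_extra.

End M_A.
Import M_A.

Module M_B.
Set Implicit Arguments.
Unset Strict Implicit.
Unset Printing Implicit Defensive.
Import Order.TTheory GRing.Theory Num.Theory.
Local Open Scope classical_set_scope.
Local Open Scope ring_scope.

Section model.
Context {R : realType}.
Variables (k0 : nat) (mu : int * int -> R) (mu'' : nat -> int * int -> R).
Local Notation law := (law1 k0 mu mu'').
Local Notation K := (kernel1 k0 mu mu'').
Hypothesis law_ge0 : forall i ab, 0 <= law i ab.
Hypothesis law_sum1 : forall i, (\esum_(ab in [set: int * int]) (law i ab)%:E = 1)%E.
Hypothesis law_supp : forall i (a b : int), a < - (i%:Z) -> law i (a, b) = 0.

Lemma K_ge0 z w : 0 <= K z w.
Proof. exact: law_ge0. Qed.

Local Open Scope ereal_scope.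

Lemma K_reindex (z : nat * int) (F : int * int -> \bar R) :
  (forall ab, 0 <= F ab) ->
  \esum_(w in [set: nat * int]) (K z w)%:E * F (w.1%:Z - z.1%:Z, w.2 - z.2)%R =
  \esum_(ab in [set: int * int]) (law z.1 ab)%:E * F ab.
Proof.
move=> F0.
rewrite [RHS](esumID [set ab : int * int | (- (z.1%:Z) <= ab.1)%R]); last first.
  by move=> ab _; apply: mule_ge0 => //; rewrite lee_fin.
rewrite [X in _ = _ + X]esum1 ?adde0; last first.
  move=> [a b] [_ /=] /negP; rewrite -ltNge => ha.
  by rewrite law_supp ?mul0e.
rewrite setTI (reindex_esum [set: nat * int] _ (fun w : nat * int => (w.1%:Z - z.1%:Z, w.2 - z.2)%R)).
  by [].
split.
- by move=> [i y] _ /=; rewrite lerBrDl addrC addNr.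
- move=> [i y] [i' y'] _ _ /= [] h1 h2.
  congr pair; lia.
- move=> [a b] /= ha; exists (`|(a + z.1%:Z)%R|%N, (b + z.2)%R) => //=.
  congr pair; lia.
Qed.

Lemma K_sum1 z : \esum_(w in [set: nat * int]) (K z w)%:E = 1.
Proof.
have := K_reindex z (F:=fun _ => 1) (fun _ => lee01).
under eq_esum do rewrite mule1.
under [X in _ = X -> _]eq_esum do rewrite mule1.
by rewrite law_sum1.
Qed.

Local Notation p := (kernelX1 k0 mu mu'').

Lemma p_ge0 i j : 0 <= p i j.
Proof. by apply: esum_ge0 => b _; rewrite lee_fin. Qed.

Lemma K_marg (z : nat * int) j :
  \esum_(b in [set: int]) (K z (j, b))%:E = p z.1 j.
Proof.
rewrite /kernelX1 (reindex_esum [set: int] [set: int] (fun b => (b + z.2)%R)).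
  by apply: eq_esum => b _; rewrite /kernel1 /= addrK.
split.
- by [].
- by move=> x y _ _ /= h; lia.
- by move=> b _; exists (b - z.2)%R => //=; lia.
Qed.

Lemma p_geK (z : nat * int) (w : nat * int) : (K z w)%:E <= p z.1 w.1.
Proof.
rewrite -K_marg; case: w => j b /=.
apply: (@esum_ge1 _ _ [set: int] (fun b => (K z (j, b))%:E) b) => // ? _; rewrite lee_fin; exact: K_ge0.
Qed.

End model.

End M_B.
Import M_B.

Module M_C.
Set Implicit Arguments.
Unset Strict Implicit.
Unset Printing Implicit Defensive.
Import Order.TTheory GRing.Theory Num.Theory.
Local Open Scope classical_set_scope.
Local Open Scope ring_scope.

Section taboo.
Context {R : realType}.
Variables (k0 : nat) (mu : int * int -> R) (mu'' : nat -> int * int -> R).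
Local Notation law := (law1 k0 mu mu'').
Local Notation K := (kernel1 k0 mu mu'').
Local Notation p := (kernelX1 k0 mu mu'').
Hypothesis law_ge0 : forall i ab, 0 <= law i ab.
Hypothesis law_sum1 : forall i, (\esum_(ab in [set: int * int]) (law i ab)%:E = 1)%E.
Hypothesis law_supp : forall i (a b : int), a < - (i%:Z) -> law i (a, b) = 0.
Variables (k : nat) (l : int).
Local Notation tau := (taboo k0 mu mu'' k (k, l)).
Local Open Scope ereal_scope.

Lemma KE_ge0 y x : 0 <= (K y x)%:E.
Proof. rewrite lee_fin; exact: K_ge0. Qed.

Lemma tau_ge0 n x : 0 <= tau n x.
Proof.
elim: n x => [|n IH] x /=; first by case: ifP.
apply: esum_ge0 => y _; apply: mule_ge0 => //; rewrite lee_fin; exact: K_ge0.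
Qed.

Definition alive n (x : nat * int) := if (n == 0%N) || (x.1 != k) then tau n x else 0.
Definition hpart n (x : nat * int) := if (0 < n)%N && (x.1 == k) then tau n x else 0.
Definition G x := \esum_(n in [set: nat]) alive n x.
Definition H x := \esum_(n in [set: nat]) hpart n x.

Lemma alive_ge0 n x : 0 <= alive n x.
Proof. by rewrite /alive; case: ifP => // _; exact: tau_ge0. Qed.
Lemma hpart_ge0 n x : 0 <= hpart n x.
Proof. by rewrite /hpart; case: ifP => // _; exact: tau_ge0. Qed.
Lemma G_ge0 x : 0 <= G x.
Proof. by apply: esum_ge0 => n _; exact: alive_ge0. Qed.
Lemma H_ge0 x : 0 <= H x.
Proof. by apply: esum_ge0 => n _; exact: hpart_ge0. Qed.

Lemma tauS n x : tau n.+1 x = \esum_(y in [set: nat * int]) alive n y * (K y x)%:E.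
Proof.
rewrite /= esum_mkcond; apply: eq_esum => y _; rewrite /alive.
have -> : (y \in [set y : nat * int | n = 0%N \/ y.1 <> k]) = (n == 0%N) || (y.1 != k).
  apply/idP/idP; rewrite inE /=.
    by case=> [->//|/eqP ->]; rewrite orbT.
  by case/orP => [/eqP ->|/eqP]; [left|right].
by case: ifP => //; rewrite mul0e.
Qed.

Lemma alive_hpart n x : alive n x + hpart n x = tau n x.
Proof.
rewrite /alive /hpart; case: n => [|n] /=; first by rewrite adde0.
by case: eqP => _ /=; rewrite ?adde0 ?add0e.
Qed.

Lemma key x : tau 0 x + \esum_(y in [set: nat * int]) G y * (K y x)%:E = G x + H x.
Proof.
have e1 : \esum_(y in [set: nat * int]) G y * (K y x)%:E =
          \esum_(n in [set: nat]) tau n.+1 x.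
  transitivity (\esum_(y in [set: nat * int]) \esum_(n in [set: nat]) alive n y * (K y x)%:E).
    apply: eq_esum => y _; rewrite /G esumZr//; [exact: KE_ge0|move=> ?; exact: alive_ge0].
  rewrite (esum_swap (a := fun y n => alive n y * (K y x)%:E)); last first.
    by move=> y n; apply: mule_ge0; [exact: alive_ge0|exact: KE_ge0].
  by apply: eq_esum => n _; rewrite tauS.
rewrite e1 /G /H -esumD; [|by move=> *; exact: alive_ge0|by move=> *; exact: hpart_ge0].
under [RHS]eq_esum do rewrite alive_hpart.
by rewrite [RHS]esum_nat_shift//; move=> n; exact: tau_ge0.
Qed.

Lemma hit_sum (c : nat * int -> \bar R) : (forall x, 0 <= c x) ->
  \esum_(nx in hit_set k) tau nx.1 nx.2 * c nx.2 =
  \esum_(x in [set: nat * int]) H x * c x.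
Proof.
move=> c0; rewrite esum_mkcond esum_prod; last first.
  by move=> z; case: ifP => // _; apply: mule_ge0 => //; exact: tau_ge0.
rewrite esum_swap; last first.
  by move=> n z; case: ifP => // _; apply: mule_ge0 => //; exact: tau_ge0.
apply: eq_esum => x _; rewrite /H -esumZr//; last by move=> ?; exact: hpart_ge0.
apply: eq_esum => n _ /=; rewrite /hpart.
have -> : ((n, x) \in hit_set k) = (0 < n)%N && (x.1 == k).
  apply/idP/idP; rewrite inE /hit_set /=.
    by case=> -> ->; rewrite eqxx.
  by case/andP => -> /eqP.
by case: ifP => //; rewrite mul0e.
Qed.

End taboo.

End M_C.
Import M_C.

Module M_D.
Set Implicit Arguments.
Unset Strict Implicit.
Unset Printing Implicit Defensive.
Import Order.TTheory GRing.Theory Num.Theory.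
Local Open Scope classical_set_scope.
Local Open Scope ring_scope.

Section Xlevel.
Context {R : realType}.
Variables (k0 : nat) (mu : int * int -> R) (mu'' : nat -> int * int -> R).
Local Notation law := (law1 k0 mu mu'').
Local Notation K := (kernel1 k0 mu mu'').
Local Notation p := (kernelX1 k0 mu mu'').
Hypothesis law_ge0 : forall i ab, 0 <= law i ab.
Hypothesis law_sum1 : forall i, (\esum_(ab in [set: int * int]) (law i ab)%:E = 1)%E.
Hypothesis law_supp : forall i (a b : int), a < - (i%:Z) -> law i (a, b) = 0.
Variables (k : nat) (l : int).
Local Notation tau := (taboo k0 mu mu'' k (k, l)).
Local Notation alive := (alive k0 mu mu'' k l).
Local Notation hpart := (hpart k0 mu mu'' k l).
Local Notation G := (G k0 mu mu'' k l).
Local Notation H := (H k0 mu mu'' k l).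
Local Notation tau_ge0 := (tau_ge0 law_ge0 k l).
Local Notation alive_ge0 := (alive_ge0 law_ge0 k l).
Local Notation hpart_ge0 := (hpart_ge0 law_ge0 k l).
Local Notation G_ge0 := (G_ge0 law_ge0 k l).
Local Notation H_ge0 := (H_ge0 law_ge0 k l).
Local Notation KE_ge0 := (KE_ge0 law_ge0).
Local Open Scope ereal_scope.

Definition alpha n i := \esum_(b in [set: int]) alive n (i, b).
Definition nu i := \esum_(n in [set: nat]) alpha n i.

Lemma alpha_ge0 n i : 0 <= alpha n i.
Proof. by apply: esum_ge0 => b _; exact: alive_ge0. Qed.
Lemma nu_ge0 i : 0 <= nu i.
Proof. by apply: esum_ge0 => n _; exact: alpha_ge0. Qed.

Lemma alpha0 (i : nat) : alpha 0%N i = if i == k then 1 else 0.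
Proof.
rewrite /alpha /alive /=; case: eqP => [->|ik].
  under eq_esum do rewrite xpair_eqE eqxx /=.
  by rewrite esum_delta.
by rewrite esum1 // => b _; rewrite xpair_eqE; case: eqP.
Qed.

Lemma alphaSk n : alpha n.+1 k = 0.
Proof. by rewrite /alpha esum1 // => b _; rewrite /alive /= eqxx. Qed.

Lemma sum_alive_p n j :
  \esum_(i in [set: nat]) alpha n i * p i j =
  \esum_(b in [set: int]) tau n.+1 (j, b).
Proof.
transitivity (\esum_(i in [set: nat]) \esum_(b in [set: int]) alive n (i, b) * p i j).
  apply: eq_esum => i _; rewrite /alpha esumZr //; [exact: p_ge0|move=> ?; exact: alive_ge0].
rewrite -(esum_prod (a := fun y => alive n y * p y.1 j)); last first.
  by move=> y; apply: mule_ge0; [exact: alive_ge0|exact: p_ge0].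
transitivity (\esum_(y in [set: nat * int]) \esum_(b in [set: int]) alive n y * (K y (j, b))%:E).
  apply: eq_esum => y _; rewrite esumZl ?K_marg//; [exact: alive_ge0|move=> ?; exact: KE_ge0].
rewrite (esum_swap (a := fun y b => alive n y * (K y (j, b))%:E)); last first.
  by move=> y b; apply: mule_ge0; [exact: alive_ge0|exact: KE_ge0].
by apply: eq_esum => b _; rewrite tauS.
Qed.

Lemma alphaS n j : j != k -> alpha n.+1 j = \esum_(i in [set: nat]) alpha n i * p i j.
Proof.
move=> jk; rewrite sum_alive_p /alpha; apply: eq_esum => b _.
by rewrite /alive /= jk.
Qed.

Lemma nu_k : nu k = 1.
Proof.
rewrite /nu esum_nat_shift; last by move=> n; exact: alpha_ge0.
by rewrite alpha0 eqxx esum1 ?adde0// => n _; rewrite alphaSk.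
Qed.

Lemma nuP j : \esum_(i in [set: nat]) nu i * p i j =
  \esum_(b in [set: int]) \esum_(n in [set: nat]) tau n.+1 (j, b).
Proof.
transitivity (\esum_(i in [set: nat]) \esum_(n in [set: nat]) alpha n i * p i j).
  apply: eq_esum => i _; rewrite /nu esumZr //; [exact: p_ge0|move=> ?; exact: alpha_ge0].
rewrite (esum_swap (a := fun i n => alpha n i * p i j)); last first.
  by move=> i n; apply: mule_ge0; [exact: alpha_ge0|exact: p_ge0].
under eq_esum do rewrite sum_alive_p.
by rewrite (esum_swap (a := fun n b => tau n.+1 (j, b))) // => n b; exact: tau_ge0.
Qed.

Lemma nu_inv j : j != k -> nu j = \esum_(i in [set: nat]) nu i * p i j.
Proof.
move=> jk; rewrite nuP /nu esum_nat_shift; last by move=> n; exact: alpha_ge0.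
rewrite alpha0 (negPf jk) add0e.
rewrite (esum_swap (a := fun b n => tau n.+1 (j, b))); last by move=> n b; exact: tau_ge0.
apply: eq_esum => n _; rewrite /alpha; apply: eq_esum => b _.
by rewrite /alive /= jk.
Qed.

Lemma H_k b : H (k, b) = \esum_(n in [set: nat]) tau n.+1 (k, b).
Proof.
rewrite /H esum_nat_shift; last by move=> n; exact: hpart_ge0.
by rewrite /hpart /= add0e; apply: eq_esum => n _ /=; rewrite eqxx.
Qed.

Lemma H_notk x : x.1 != k -> H x = 0.
Proof. by move=> xk; rewrite /H esum1 // => n _; rewrite /hpart (negPf xk) andbF. Qed.

Lemma sumH_k : \esum_(x in [set: nat * int]) H x = \esum_(b in [set: int]) H (k, b).
Proof.
rewrite (esum_prod (a := H)); last exact: H_ge0.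
rewrite (esumID [set k]); last by move=> i _; apply: esum_ge0 => b _; exact: H_ge0.
rewrite setTI esum_set1; last by apply: esum_ge0 => b _; exact: H_ge0.
rewrite [X in _ + X = _]esum1 ?adde0 // => i [_ /= /eqP ik]; rewrite esum1 // => b _; exact: H_notk.
Qed.

Lemma nuP_k : \esum_(i in [set: nat]) nu i * p i k = \esum_(x in [set: nat * int]) H x.
Proof. by rewrite nuP sumH_k; apply: eq_esum => b _; rewrite H_k. Qed.

Lemma sumG_fun1 (c : nat -> \bar R) : (forall i, 0 <= c i) ->
  \esum_(x in [set: nat * int]) G x * c x.1 = \esum_(i in [set: nat]) nu i * c i.
Proof.
move=> c0; rewrite (esum_prod (a := fun x => G x * c x.1)); last first.
  by move=> x; apply: mule_ge0; [exact: G_ge0|exact: c0].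
apply: eq_esum => i _ /=; rewrite esumZr //; last by move=> ?; exact: G_ge0.
congr (_ * _); rewrite /nu /G.
rewrite (esum_swap (a := fun b n => alive n (i, b))) //; last by move=> *; exact: alive_ge0.
Qed.

End Xlevel.

End M_D.
Import M_D.

Module M_E.
Set Implicit Arguments.
Unset Strict Implicit.
Unset Printing Implicit Defensive.
Import Order.TTheory GRing.Theory Num.Theory.
Local Open Scope classical_set_scope.
Local Open Scope ring_scope.

Lemma addeI_fin {R : realType} (a x y : \bar R) : a \is a fin_num -> (a + x = a + y)%E -> x = y.
Proof.
move=> af e; have := congr1 (fun t => t - a)%E e.
by rewrite ![(a + _)%E]addeC !addeK.
Qed.

Section invariant.
Context {R : realType}.
Variables (k0 : nat) (mu : int * int -> R) (mu'' : nat -> int * int -> R).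
Local Notation law := (law1 k0 mu mu'').
Local Notation K := (kernel1 k0 mu mu'').
Local Notation p := (kernelX1 k0 mu mu'').
Hypothesis law_ge0 : forall i ab, 0 <= law i ab.
Hypothesis law_sum1 : forall i, (\esum_(ab in [set: int * int]) (law i ab)%:E = 1)%E.
Hypothesis law_supp : forall i (a b : int), a < - (i%:Z) -> law i (a, b) = 0.
Variable pi : nat -> R.
Hypothesis pi_ge0 : forall i, 0 <= pi i.
Hypothesis pi_sum1 : (\esum_(i in [set: nat]) (pi i)%:E = 1)%E.
Hypothesis pi_inv : forall j, ((pi j)%:E = \esum_(i in [set: nat]) (pi i)%:E * p i j)%E.
Hypothesis irr : irreducible K.
Local Open Scope ereal_scope.

Lemma pi_path (s : seq (nat * int)) x :
  path (fun a b => (0 < K a b)%R) x s -> (0 < pi x.1)%R -> (0 < pi (last x s).1)%R.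
Proof.
elim: s x => [//|y s IH] x /= /andP[Kxy ps] px; apply: IH => //.
rewrite -lte_fin pi_inv; apply: (@lt_le_trans _ _ ((pi x.1)%:E * p x.1 y.1)).
  apply: mule_gt0; first by rewrite lte_fin.
  by apply: (lt_le_trans _ (p_geK law_ge0 x y)); rewrite lte_fin.
apply: (@esum_ge1 _ _ [set: nat] (fun i => (pi i)%:E * p i y.1) x.1) => // i _.
by apply: mule_ge0; [rewrite lee_fin|exact: p_ge0].
Qed.

Lemma pi_gt0 k : (0 < pi k)%R.
Proof.
have [j pj] : exists j, (0 < pi j)%R.
  apply/not_existsP => hall.
  have : (\esum_(i in [set: nat]) (pi i)%:E) = 0.
    apply: esum1 => i _; have := hall i; have := pi_ge0 i.
    by rewrite le_eqVlt => /orP[/eqP <-//|->//].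
  by rewrite pi_sum1 => /eqP; rewrite onee_eq0.
have [s [ps ls]] := irr (j, 0%R) (k, 0%R).
by have := pi_path ps pj; rewrite ls.
Qed.

Variables (k : nat) (l : int).
Local Notation tau := (taboo k0 mu mu'' k (k, l)).
Local Notation alive := (alive k0 mu mu'' k l).
Local Notation G := (G k0 mu mu'' k l).
Local Notation H := (H k0 mu mu'' k l).
Local Notation alpha := (alpha k0 mu mu'' k l).
Local Notation nu := (nu k0 mu mu'' k l).
Local Notation alpha_ge0 := (alpha_ge0 law_ge0 k l).
Local Notation nu_ge0 := (nu_ge0 law_ge0 k l).
Local Notation G_ge0 := (G_ge0 law_ge0 k l).
Local Notation H_ge0 := (H_ge0 law_ge0 k l).
Local Notation tau_ge0 := (tau_ge0 law_ge0 k l).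
Local Notation KE_ge0 := (KE_ge0 law_ge0).

Definition lam i := ((pi i) / (pi k))%:E.

Lemma lam_ge0 i : 0 <= lam i.
Proof. by rewrite lee_fin divr_ge0 // ltW // pi_gt0. Qed.

Lemma lam_k : lam k = 1.
Proof. by rewrite /lam divff // gt_eqF // pi_gt0. Qed.

Lemma lam_inv j : lam j = \esum_(i in [set: nat]) lam i * p i j.
Proof.
rewrite /lam EFinM pi_inv -esumZr; last by move=> i; apply: mule_ge0; [rewrite lee_fin|exact: p_ge0].
  by apply: eq_esum => i _; rewrite EFinM muleAC.
by rewrite lee_fin invr_ge0.
Qed.

Lemma lam_sum : \esum_(i in [set: nat]) lam i = ((pi k)^-1)%:E.
Proof.
rewrite /lam; under eq_esum do rewrite EFinM.
by rewrite esumZr ?pi_sum1 ?mul1e // lee_fin invr_ge0.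
Qed.

Lemma partial_le N j : \sum_(0 <= n < N) alpha n j <= lam j.
Proof.
elim: N j => [|N IH] j; first by rewrite big_geq // lam_ge0.
rewrite big_nat_recl // alpha0.
case: eqP => [->|/eqP jk].
  rewrite big1 ?adde0 ?lam_k // => n _; exact: alphaSk.
rewrite add0e.
under eq_bigr do rewrite (alphaS law_ge0) //.
rewrite -esum_sum; last by move=> i n _ _; apply: mule_ge0; [exact: alpha_ge0|exact: p_ge0].
rewrite lam_inv; apply: le_esum => i _.
rewrite -ge0_sume_distrl; last by move=> n _; exact: alpha_ge0.
by apply: lee_wpmul2r; [exact: p_ge0|exact: IH].
Qed.

Lemma nu_le j : nu j <= lam j.
Proof.
rewrite /nu -nneseries_esumT; last by move=> n; exact: alpha_ge0.
apply: lime_le; first by apply: is_cvg_nneseries => *; exact: alpha_ge0.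
by apply: filterE => N; exact: partial_le.
Qed.

Lemma tau0_sum : \esum_(x in [set: nat * int]) tau 0%N x = 1.
Proof. exact: esum_delta. Qed.

Lemma ET_le : \esum_(x in [set: nat * int]) G x <= ((pi k)^-1)%:E.
Proof.
have := sumG_fun1 law_ge0 k l (c := fun=> 1) (fun=> lee01).
under eq_esum do rewrite mule1.
under [X in _ = X -> _]eq_esum do rewrite mule1.
move=> ->; rewrite -lam_sum; apply: le_esum => i _; exact: nu_le.
Qed.

Lemma ET_fin : (\esum_(x in [set: nat * int]) G x) \is a fin_num.
Proof.
rewrite ge0_fin_numE; last by apply: esum_ge0 => x _; exact: G_ge0.
exact: (le_lt_trans ET_le (ltry _)).
Qed.

Lemma sumGK : \esum_(x in [set: nat * int]) \esum_(y in [set: nat * int]) G y * (K y x)%:E =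
  \esum_(y in [set: nat * int]) G y.
Proof.
rewrite (esum_swap (a := fun x y => G y * (K y x)%:E)); last first.
  by move=> x y; apply: mule_ge0; [exact: G_ge0|exact: KE_ge0].
apply: eq_esum => y _; rewrite esumZl; [|exact: G_ge0|by move=> ?; exact: KE_ge0].
by rewrite (K_sum1 law_ge0 law_sum1 law_supp) mule1.
Qed.

Lemma sumH1 : \esum_(x in [set: nat * int]) H x = 1.
Proof.
have e : \esum_(x in [set: nat * int]) (tau 0%N x + \esum_(y in [set: nat * int]) G y * (K y x)%:E) =
         \esum_(x in [set: nat * int]) (G x + H x).
  by apply: eq_esum => x _; rewrite (key law_ge0).
rewrite esumD in e; [|by move=> *; exact: tau_ge0|move=> x _; apply: esum_ge0 => y _;
  by apply: mule_ge0; [exact: G_ge0|exact: KE_ge0]].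
rewrite esumD in e; [|by move=> *; exact: G_ge0|by move=> *; exact: H_ge0].
rewrite tau0_sum sumGK addeC in e.
by apply: (addeI_fin ET_fin); rewrite -e.
Qed.

Lemma nu_inv_all j : nu j = \esum_(i in [set: nat]) nu i * p i j.
Proof.
have [->|jk] := eqVneq j k; last exact: (nu_inv law_ge0).
by rewrite (nuP_k law_ge0) sumH1 (nu_k law_ge0).
Qed.

Lemma nu_fin j : nu j \is a fin_num.
Proof.
rewrite ge0_fin_numE; last exact: nu_ge0.
exact: (le_lt_trans (nu_le j) (ltry _)).
Qed.

Definition mm i := lam i - nu i.

Lemma mm_ge0 i : 0 <= mm i.
Proof. by rewrite /mm sube_ge0 ?nu_le // nu_fin orbT. Qed.

Lemma lam_split i : lam i = nu i + mm i.
Proof. by rewrite /mm addeC subeK // nu_fin. Qed.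

Lemma mm_inv j : mm j = \esum_(i in [set: nat]) mm i * p i j.
Proof.
have e : lam j = nu j + \esum_(i in [set: nat]) mm i * p i j.
  rewrite lam_inv nu_inv_all -esumD; [|by move=> i _; apply: mule_ge0; [exact: nu_ge0|exact: p_ge0]
     |by move=> i _; apply: mule_ge0; [exact: mm_ge0|exact: p_ge0]].
  apply: eq_esum => i _; rewrite lam_split ge0_muleDl //; [exact: nu_ge0|exact: mm_ge0].
by rewrite /mm e addeC addeK // nu_fin.
Qed.

Lemma mm_k : mm k = 0.
Proof. by rewrite /mm lam_k (nu_k law_ge0) subee. Qed.

Lemma mm_path (s : seq (nat * int)) x :
  path (fun a b => (0 < K a b)%R) x s -> mm (last x s).1 = 0 -> mm x.1 = 0.
Proof.
elim: s x => [//|y s IH] x /= /andP[Kxy ps] ml.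
have my := IH _ ps ml.
apply/eqP; rewrite eq_le mm_ge0 andbT leNgt; apply/negP => mx.
have : 0 < mm x.1 * p x.1 y.1.
  apply: mule_gt0 => //.
  by apply: (lt_le_trans _ (p_geK law_ge0 x y)); rewrite lte_fin.
rewrite ltNge => /negP; apply.
rewrite -my (mm_inv y.1).
apply: (@esum_ge1 _ _ [set: nat] (fun i => mm i * p i y.1) x.1) => // i _.
by apply: mule_ge0; [exact: mm_ge0|exact: p_ge0].
Qed.

Lemma nu_eq j : nu j = lam j.
Proof.
have [s [ps ls]] := irr (j, 0%R) (k, 0%R).
have := mm_path ps; rewrite ls /= => /(_ mm_k) m0.
by rewrite lam_split m0 adde0.
Qed.

End invariant.

End M_E.
Import M_E.

Module M_F.
Set Implicit Arguments.
Unset Strict Implicit.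
Unset Printing Implicit Defensive.
Import Order.TTheory GRing.Theory Num.Theory.
Local Open Scope classical_set_scope.
Local Open Scope ring_scope.

Ltac mm := repeat (match goal with
  | |- context [Num.min ?x ?y] => case: (leP x y) => ?
  | |- context [Num.max ?x ?y] => case: (leP x y) => ? end); try lra.

Section limits.
Context {R : realType}.
Local Open Scope ereal_scope.

Lemma sup_att (f : nat -> \bar R) L : (forall n, f n <= L) -> (exists N, f N = L) ->
  ereal_sup (range f) = L.
Proof.
move=> fL [N fN]; apply/eqP; rewrite eq_le; apply/andP; split.
  by apply: ub_ereal_sup => _ [n _ <-].
by rewrite -fN; apply: ereal_sup_ubound; exists N.
Qed.

Lemma cvg_att (f : nat -> \bar R) L : nondecreasing_seq f -> (forall n, f n <= L) ->
  (exists N, f N = L) -> f @ \oo --> L.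
Proof. by move=> nd fL fN; rewrite -(sup_att fL fN); exact: ereal_nondecreasing_cvgn. Qed.

Lemma cvg_esum_att (T : choiceType) (f : nat -> T -> \bar R) (g : T -> \bar R) :
  (forall n x, 0 <= f n x) -> (forall x, nondecreasing_seq (f ^~ x)) ->
  (forall n x, f n x <= g x) -> (forall x, exists N, f N x = g x) ->
  (fun n => \esum_(x in [set: T]) f n x) @ \oo --> \esum_(x in [set: T]) g x.
Proof.
move=> f0 nd fg att.
have -> : \esum_(x in [set: T]) g x = \esum_(x in [set: T]) ereal_sup (range (f ^~ x)).
  by apply: eq_esum => x _; rewrite (sup_att (fun n => fg n x) (att x)).
rewrite esum_sup //; apply: ereal_nondecreasing_cvgn => m n mn.
by apply: le_esum => x _; exact: nd.
Qed.

End limits.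

Section clip.
Context {R : realType}.
Lemma cl_mono (a b : R) (M M' : nat) : (M <= M')%N ->
  Num.max (Num.min a M%:R - Num.min b M%:R) 0 <= Num.max (Num.min a M'%:R - Num.min b M'%:R) 0.
Proof. rewrite -(ler_nat R) => ?; mm. Qed.
Lemma cl_le (a b : R) (M : nat) :
  Num.max (Num.min a M%:R - Num.min b M%:R) 0 <= Num.max (a - b) 0.
Proof. mm. Qed.
Lemma cl_att (a b : R) (M : nat) : a <= M%:R -> b <= M%:R ->
  Num.max (Num.min a M%:R - Num.min b M%:R) 0 = Num.max (a - b) 0.
Proof. by move=> h1 h2; rewrite (min_l h1) (min_l h2). Qed.
Lemma min_mono (a : R) (M M' : nat) : (M <= M')%N -> Num.min a M%:R <= Num.min a M'%:R.
Proof. rewrite -(ler_nat R) => ?; mm. Qed.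
Lemma bound2 (a b : R) : 0 <= a -> 0 <= b -> exists N : nat, a <= N%:R /\ b <= N%:R.
Proof.
move=> a0 b0; have := archi_boundP (addr_ge0 a0 b0); set N := Num.Def.archi_bound _ => h.
by exists N; split; lra.
Qed.
End clip.

Section Ypart.
Context {R : realType}.
Variables (k0 : nat) (mu : int * int -> R) (mu'' : nat -> int * int -> R).
Local Notation law := (law1 k0 mu mu'').
Local Notation K := (kernel1 k0 mu mu'').
Local Notation p := (kernelX1 k0 mu mu'').
Hypothesis law_ge0 : forall i ab, 0 <= law i ab.
Hypothesis law_sum1 : forall i, (\esum_(ab in [set: int * int]) (law i ab)%:E = 1)%E.
Hypothesis law_supp : forall i (a b : int), a < - (i%:Z) -> law i (a, b) = 0.
Variables (k : nat) (l : int).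
Local Notation tau := (taboo k0 mu mu'' k (k, l)).
Local Notation G := (G k0 mu mu'' k l).
Local Notation H := (H k0 mu mu'' k l).
Local Notation G_ge0 := (G_ge0 law_ge0 k l).
Local Notation H_ge0 := (H_ge0 law_ge0 k l).
Local Notation tau_ge0 := (tau_ge0 law_ge0 k l).
Local Notation KE_ge0 := (KE_ge0 law_ge0).
Hypothesis ET_fin : (\esum_(x in [set: nat * int]) G x)%E \is a fin_num.
Variable h : nat * int -> R.
Hypothesis h_ge0 : forall x, 0 <= h x.

Definition phi (M : nat) x := Num.min (h x) M%:R.
Definition tp (M : nat) y w := Num.max (phi M w - phi M y) 0.
Definition tn (M : nat) y w := Num.max (phi M y - phi M w) 0.
Definition tpi y w := Num.max (h w - h y) 0.
Definition tni y w := Num.max (h y - h w) 0.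
Local Open Scope ereal_scope.
Definition Dsum (t : nat * int -> nat * int -> R) :=
  \esum_(yw in [set: (nat * int) * (nat * int)]) G yw.1 * ((K yw.1 yw.2)%:E * (t yw.1 yw.2)%:E).

Lemma phi_ge0 M x : (0 <= phi M x)%R.
Proof. rewrite /phi; have := h_ge0 x; have : (0 <= M%:R :> R)%R by []; mm. Qed.

Lemma Dsum_split t : (forall y w, 0 <= t y w)%R ->
  Dsum t = \esum_(y in [set: nat * int]) G y * \esum_(w in [set: nat * int]) (K y w)%:E * (t y w)%:E.
Proof.
move=> t0; rewrite /Dsum (esum_prod (a := fun yw => G yw.1 * ((K yw.1 yw.2)%:E * (t yw.1 yw.2)%:E))); last first.
  by move=> yw; apply: mule_ge0; [exact: G_ge0|apply: mule_ge0; rewrite lee_fin ?K_ge0 ?t0].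
apply: eq_esum => y _ /=; rewrite esumZl //; first exact: G_ge0.
by move=> w; apply: mule_ge0; rewrite lee_fin ?K_ge0 ?t0.
Qed.

Lemma step_pw M y :
  \esum_(w in [set: nat * int]) (K y w)%:E * (phi M w)%:E +
  \esum_(w in [set: nat * int]) (K y w)%:E * (tn M y w)%:E =
  (phi M y)%:E + \esum_(w in [set: nat * int]) (K y w)%:E * (tp M y w)%:E.
Proof.
have -> : (phi M y)%:E = \esum_(w in [set: nat * int]) (K y w)%:E * (phi M y)%:E.
  by rewrite esumZr ?(K_sum1 law_ge0 law_sum1 law_supp) ?mul1e // ?lee_fin ?phi_ge0 // => w; exact: KE_ge0.
rewrite -!esumD; try by move=> w _; apply: mule_ge0; rewrite lee_fin ?K_ge0 ?phi_ge0 // /tp /tn; mm.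
apply: eq_esum => w _; rewrite -!EFinM -!EFinD -!mulrDr; congr (_ * _)%:E.
rewrite /tp /tn; mm.
Qed.

Definition GPhi M := \esum_(x in [set: nat * int]) G x * (phi M x)%:E.
Definition HPhi M := \esum_(x in [set: nat * int]) H x * (phi M x)%:E.
Definition KPhi M y := \esum_(w in [set: nat * int]) (K y w)%:E * (phi M w)%:E.

Lemma phiE_ge0 M x : 0 <= (phi M x)%:E.
Proof. by rewrite lee_fin phi_ge0. Qed.

Lemma KPhi_ge0 M y : 0 <= KPhi M y.
Proof. by apply: esum_ge0 => w _; apply: mule_ge0; [exact: KE_ge0|exact: phiE_ge0]. Qed.

Lemma key_phi M : (phi M (k, l))%:E + \esum_(y in [set: nat * int]) G y * KPhi M y = GPhi M + HPhi M.
Proof.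
have L1 : \esum_(x in [set: nat * int]) tau 0%N x * (phi M x)%:E = (phi M (k, l))%:E.
  rewrite -(esum_delta (k, l) (phiE_ge0 M (k, l))); apply: eq_esum => x _ /=.
  by case: eqP => [->|]; rewrite ?mul1e ?mul0e.
have L2 : \esum_(x in [set: nat * int]) (\esum_(y in [set: nat * int]) G y * (K y x)%:E) * (phi M x)%:E
    = \esum_(y in [set: nat * int]) G y * KPhi M y.
  transitivity (\esum_(x in [set: nat * int]) \esum_(y in [set: nat * int]) G y * (K y x)%:E * (phi M x)%:E).
    apply: eq_esum => x _; rewrite esumZr //; first exact: phiE_ge0.
    by move=> y; apply: mule_ge0; [exact: G_ge0|exact: KE_ge0].
  rewrite (esum_swap (a := fun x y => G y * (K y x)%:E * (phi M x)%:E)); last first.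
    by move=> x y; apply: mule_ge0; [apply: mule_ge0; [exact: G_ge0|exact: KE_ge0]|exact: phiE_ge0].
  apply: eq_esum => y _; rewrite /KPhi -esumZl; [|exact: G_ge0|].
    by apply: eq_esum => x _; rewrite muleA.
  by move=> x; apply: mule_ge0; [exact: KE_ge0|exact: phiE_ge0].
rewrite -L1 -L2 -esumD; first last.
- move=> x _; apply: mule_ge0; last exact: phiE_ge0.
  by apply: esum_ge0 => y _; apply: mule_ge0; [exact: G_ge0|exact: KE_ge0].
- by move=> x _; apply: mule_ge0; [exact: tau_ge0|exact: phiE_ge0].
rewrite /GPhi /HPhi -esumD; first last.
- by move=> x _; apply: mule_ge0; [exact: H_ge0|exact: phiE_ge0].
- by move=> x _; apply: mule_ge0; [exact: G_ge0|exact: phiE_ge0].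
apply: eq_esum => x _; rewrite -!ge0_muleDl ?(key law_ge0) //.
- exact: G_ge0.
- exact: H_ge0.
- exact: tau_ge0.
- by apply: esum_ge0 => y _; apply: mule_ge0; [exact: G_ge0|exact: KE_ge0].
Qed.

Lemma GPhi_fin M : GPhi M \is a fin_num.
Proof.
have le : GPhi M <= (\esum_(x in [set: nat * int]) G x) * (M%:R)%:E.
  rewrite -esumZr //; last by move=> x; exact: G_ge0.
  apply: le_esum => x _; apply: lee_wpmul2l; first exact: G_ge0.
  by rewrite lee_fin /phi; mm.
have f : ((\esum_(x in [set: nat * int]) G x) * (M%:R)%:E) \is a fin_num by rewrite fin_numM.
rewrite ge0_fin_numE; last by apply: esum_ge0 => x _; apply: mule_ge0; [exact: G_ge0|exact: phiE_ge0].
by apply: (le_lt_trans le); rewrite -ge0_fin_numE // mule_ge0 //; apply: esum_ge0 => x _; exact: G_ge0.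
Qed.

Lemma tp_ge0 M y w : (0 <= tp M y w)%R. Proof. rewrite /tp; mm. Qed.
Lemma tn_ge0 M y w : (0 <= tn M y w)%R. Proof. rewrite /tn; mm. Qed.

Lemma ident M : (phi M (k, l))%:E + Dsum (tp M) = HPhi M + Dsum (tn M).
Proof.
have Tge0 t : (forall y w, 0 <= t y w)%R -> forall y,
    0 <= \esum_(w in [set: nat * int]) (K y w)%:E * (t y w)%:E.
  by move=> t0 y; apply: esum_ge0 => w _; apply: mule_ge0; [exact: KE_ge0|rewrite lee_fin t0].
have s : (\esum_(y in [set: nat * int]) G y * KPhi M y) +
         (\esum_(y in [set: nat * int]) G y * \esum_(w in [set: nat * int]) (K y w)%:E * (tn M y w)%:E) =
         GPhi M +
         (\esum_(y in [set: nat * int]) G y * \esum_(w in [set: nat * int]) (K y w)%:E * (tp M y w)%:E).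
  have P y : [/\ 0 <= G y, 0 <= KPhi M y, 0 <= (phi M y)%:E,
      0 <= \esum_(w in [set: nat * int]) (K y w)%:E * (tn M y w)%:E &
      0 <= \esum_(w in [set: nat * int]) (K y w)%:E * (tp M y w)%:E].
    by split; [exact: G_ge0|exact: KPhi_ge0|exact: phiE_ge0|exact: (Tge0 _ (tn_ge0 M) y)|exact: (Tge0 _ (tp_ge0 M) y)].
  rewrite /GPhi -!esumD; try by move=> y _; have [? ? ? ? ?] := P y; apply: mule_ge0.
  apply: eq_esum => y _; have [? ? ? ? ?] := P y; rewrite -!ge0_muleDr //.
  by rewrite /KPhi step_pw.
rewrite !Dsum_split; [|exact: tn_ge0|exact: tp_ge0].
apply: (addeI_fin (GPhi_fin M)).
rewrite addeCA -s addeA key_phi -addeA //.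
Qed.

Lemma Ylim : (h (k, l))%:E + Dsum tpi = \esum_(x in [set: nat * int]) H x * (h x)%:E + Dsum tni.
Proof.
have cD (t : nat -> nat * int -> nat * int -> R) (ti : nat * int -> nat * int -> R) :
    (forall M y w, 0 <= t M y w)%R -> (forall M M' y w, (M <= M')%N -> t M y w <= t M' y w)%R ->
    (forall M y w, t M y w <= ti y w)%R -> (forall y w, exists N, t N y w = ti y w) ->
    (fun M => Dsum (t M)) @ \oo --> Dsum ti.
  move=> t0 tm tl ta; apply: cvg_esum_att.
  - by move=> M yw; apply: mule_ge0; [exact: G_ge0|apply: mule_ge0; [exact: KE_ge0|rewrite lee_fin]].
  - move=> yw M M' MM'; apply: lee_wpmul2l; first exact: G_ge0.
    by apply: lee_wpmul2l; [exact: KE_ge0|rewrite lee_fin; exact: tm].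
  - move=> M yw; apply: lee_wpmul2l; first exact: G_ge0.
    by apply: lee_wpmul2l; [exact: KE_ge0|rewrite lee_fin; exact: tl].
  - by move=> [y w]; have [N e] := ta y w; exists N => /=; rewrite e.
have cp : (fun M => Dsum (tp M)) @ \oo --> Dsum tpi.
  apply: cD; [exact: tp_ge0|by move=> *; exact: cl_mono|by move=> *; exact: cl_le|].
  move=> y w; have [N [h1 h2]] := bound2 (h_ge0 w) (h_ge0 y).
  by exists N; rewrite /tp /phi cl_att.
have cn : (fun M => Dsum (tn M)) @ \oo --> Dsum tni.
  apply: cD; [exact: tn_ge0|by move=> *; exact: cl_mono|by move=> *; exact: cl_le|].
  move=> y w; have [N [h1 h2]] := bound2 (h_ge0 y) (h_ge0 w).
  by exists N; rewrite /tn /phi cl_att.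
have c0 : (fun M => (phi M (k, l))%:E) @ \oo --> (h (k, l))%:E.
  apply: cvg_att.
  - by move=> M M' MM'; rewrite lee_fin; exact: min_mono.
  - by move=> M; rewrite lee_fin /phi; mm.
  - have [N [h1 _]] := bound2 (h_ge0 (k, l)) (h_ge0 (k, l)).
    by exists N; rewrite /phi min_l.
have cH : (fun M => HPhi M) @ \oo --> \esum_(x in [set: nat * int]) H x * (h x)%:E.
  apply: cvg_esum_att.
  - by move=> M x; apply: mule_ge0; [exact: H_ge0|exact: phiE_ge0].
  - by move=> x M M' MM'; apply: lee_wpmul2l; [exact: H_ge0|rewrite lee_fin; exact: min_mono].
  - by move=> M x; apply: lee_wpmul2l; [exact: H_ge0|rewrite lee_fin /phi; mm].
  - move=> x; have [N [h1 _]] := bound2 (h_ge0 x) (h_ge0 x).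
    by exists N; rewrite /phi min_l.
have Dge0 t : (forall y w, 0 <= t y w)%R -> 0 <= Dsum t.
  move=> t0; apply: esum_ge0 => yw _; apply: mule_ge0; first exact: G_ge0.
  by apply: mule_ge0; [exact: KE_ge0|rewrite lee_fin t0].
have tpi0 y w : (0 <= tpi y w)%R by rewrite /tpi; mm.
have tni0 y w : (0 <= tni y w)%R by rewrite /tni; mm.
have cu : (fun M => (phi M (k, l))%:E + Dsum (tp M)) @ \oo --> (h (k, l))%:E + Dsum tpi.
  apply: cvgeD c0 cp; apply: ge0_adde_def; rewrite inE; last exact: Dge0.
  by rewrite lee_fin.
have cv : (fun M => HPhi M + Dsum (tn M)) @ \oo --> \esum_(x in [set: nat * int]) H x * (h x)%:E + Dsum tni.
  apply: cvgeD cH cn; apply: ge0_adde_def; rewrite inE; last exact: Dge0.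
  by apply: esum_ge0 => x _; apply: mule_ge0; [exact: H_ge0|rewrite lee_fin].
rewrite -(cvg_lim (@ereal_hausdorff R) cu) -(cvg_lim (@ereal_hausdorff R) cv).
have -> : (fun M => (phi M (k, l))%:E + Dsum (tp M)) = (fun M => HPhi M + Dsum (tn M)).
  by apply: funext => M; exact: ident.
by [].
Qed.

End Ypart.

End M_F.
Import M_F.

Module M_G.
Set Implicit Arguments.
Unset Strict Implicit.
Unset Printing Implicit Defensive.
Import Order.TTheory GRing.Theory Num.Theory.
Local Open Scope classical_set_scope.
Local Open Scope ring_scope.

Ltac mm := repeat (match goal with
  | |- context [Num.min ?x ?y] => case: (leP x y) => ?
  | |- context [Num.max ?x ?y] => case: (leP x y) => ? end); try lra.

Section final.
Context {R : realType}.
Variables (k0 : nat) (mu : int * int -> R) (mu'' : nat -> int * int -> R).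
Local Notation law := (law1 k0 mu mu'').
Local Notation K := (kernel1 k0 mu mu'').
Local Notation p := (kernelX1 k0 mu mu'').
Hypothesis law_ge0 : forall i ab, 0 <= law i ab.
Hypothesis law_sum1 : forall i, (\esum_(ab in [set: int * int]) (law i ab)%:E = 1)%E.
Hypothesis law_supp : forall i (a b : int), a < - (i%:Z) -> law i (a, b) = 0.
Variable pi : nat -> R.
Hypothesis pi_ge0 : forall i, 0 <= pi i.
Hypothesis pi_sum1 : (\esum_(i in [set: nat]) (pi i)%:E = 1)%E.
Hypothesis pi_inv : forall j, ((pi j)%:E = \esum_(i in [set: nat]) (pi i)%:E * p i j)%E.
Hypothesis irr : irreducible K.
Variable Cg : R.
Hypothesis law_abs : forall i,
  (\esum_(ab in [set: int * int]) (law i ab)%:E * (`|(ab.2)%:~R : R|)%:E <= Cg%:E)%E.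
Variables (k : nat) (l : int).
Local Notation tau := (taboo k0 mu mu'' k (k, l)).
Local Notation G := (G k0 mu mu'' k l).
Local Notation H := (H k0 mu mu'' k l).
Local Notation G_ge0 := (G_ge0 law_ge0 k l).
Local Notation H_ge0 := (H_ge0 law_ge0 k l).
Local Notation KE_ge0 := (KE_ge0 law_ge0).
Local Notation ET_fin := (ET_fin law_ge0 pi_ge0 pi_sum1 pi_inv irr k l).
Local Notation Dsum := (Dsum k0 mu mu'' k l).
Local Open Scope ereal_scope.

Definition ET := \esum_(x in [set: nat * int]) G x.

Lemma Cg_ge0 : (0 <= Cg)%R.
Proof.
rewrite -lee_fin; apply: le_trans (law_abs 0); apply: esum_ge0 => ab _.
by apply: mule_ge0; rewrite lee_fin.
Qed.

Lemma Kabs_le y : \esum_(w in [set: nat * int]) (K y w)%:E * (`|(w.2 - y.2)%:~R : R|)%:E <= Cg%:E.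
Proof.
have := K_reindex law_ge0 law_supp y (F := fun ab => (`|(ab.2)%:~R : R|)%:E) (fun _ => normr_ge0 _).
by move=> /= ->; exact: law_abs.
Qed.

Lemma Dsum_le (t : nat * int -> nat * int -> R) :
  (forall y w, 0 <= t y w)%R -> (forall y w, t y w <= `|(w.2 - y.2)%:~R : R|)%R ->
  Dsum t <= ET * Cg%:E.
Proof.
move=> t0 tl; rewrite (Dsum_split law_ge0) // /ET -esumZr; last by move=> x; exact: G_ge0.
  apply: le_esum => y _; apply: lee_wpmul2l; first exact: G_ge0.
  apply: le_trans (Kabs_le y); apply: le_esum => w _; apply: lee_wpmul2l; first exact: KE_ge0.
  by rewrite lee_fin.
by rewrite lee_fin Cg_ge0.
Qed.

Lemma Dsum_fin (t : nat * int -> nat * int -> R) :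
  (forall y w, 0 <= t y w)%R -> (forall y w, t y w <= `|(w.2 - y.2)%:~R : R|)%R ->
  Dsum t \is a fin_num.
Proof.
move=> t0 tl; rewrite ge0_fin_numE; last first.
  apply: esum_ge0 => yw _; apply: mule_ge0; first exact: G_ge0.
  by apply: mule_ge0; [exact: KE_ge0|rewrite lee_fin].
apply: (le_lt_trans (Dsum_le t0 tl)); rewrite -ge0_fin_numE; first by apply: fin_numM => //; exact: ET_fin.
by apply: mule_ge0; [apply: esum_ge0 => x _; exact: G_ge0|rewrite lee_fin Cg_ge0].
Qed.

Local Close Scope ereal_scope.
Definition hp (x : nat * int) : R := Num.max (x.2%:~R : R) 0.
Definition hn (x : nat * int) : R := Num.max (- (x.2%:~R : R)) 0.
Lemma hp_ge0 x : 0 <= hp x. Proof. rewrite /hp; mm. Qed.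
Lemma hn_ge0 x : 0 <= hn x. Proof. rewrite /hn; mm. Qed.

Lemma absB (y w : nat * int) : `|(w.2 - y.2)%:~R : R| = `|w.2%:~R - y.2%:~R : R|.
Proof. by rewrite intrB. Qed.

Lemma tb_pp y w : tpi hp y w <= `|(w.2 - y.2)%:~R : R|.
Proof.
rewrite absB /tpi /hp; set a := (w.2%:~R : R); set b := (y.2%:~R : R).
have h1 := ler_norm (a - b); have h2 := ler_norm (b - a); rewrite distrC in h2; mm.
Qed.
Lemma tb_pn y w : tni hp y w <= `|(w.2 - y.2)%:~R : R|.
Proof.
rewrite absB /tni /hp; set a := (w.2%:~R : R); set b := (y.2%:~R : R).
have h1 := ler_norm (a - b); have h2 := ler_norm (b - a); rewrite distrC in h2; mm.
Qed.
Lemma tb_np y w : tpi hn y w <= `|(w.2 - y.2)%:~R : R|.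
Proof.
rewrite absB /tpi /hn; set a := (w.2%:~R : R); set b := (y.2%:~R : R).
have h1 := ler_norm (a - b); have h2 := ler_norm (b - a); rewrite distrC in h2; mm.
Qed.
Lemma tb_nn y w : tni hn y w <= `|(w.2 - y.2)%:~R : R|.
Proof.
rewrite absB /tni /hn; set a := (w.2%:~R : R); set b := (y.2%:~R : R).
have h1 := ler_norm (a - b); have h2 := ler_norm (b - a); rewrite distrC in h2; mm.
Qed.
Lemma tpi_ge0 (h : nat * int -> R) y w : 0 <= tpi h y w. Proof. rewrite /tpi; mm. Qed.
Lemma tni_ge0 (h : nat * int -> R) y w : 0 <= tni h y w. Proof. rewrite /tni; mm. Qed.

Local Open Scope ereal_scope.
Definition A := \esum_(x in [set: nat * int]) H x * (hp x)%:E.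
Definition B := \esum_(x in [set: nat * int]) H x * (hn x)%:E.

Lemma Yp : (hp (k, l))%:E + Dsum (tpi hp) = A + Dsum (tni hp).
Proof. exact: (Ylim law_ge0 law_sum1 law_supp ET_fin hp_ge0). Qed.
Lemma Yn : (hn (k, l))%:E + Dsum (tpi hn) = B + Dsum (tni hn).
Proof. exact: (Ylim law_ge0 law_sum1 law_supp ET_fin hn_ge0). Qed.

Lemma A_fin : A \is a fin_num.
Proof.
have A0 : 0 <= A by apply: esum_ge0 => x _; apply: mule_ge0; [exact: H_ge0|rewrite lee_fin hp_ge0].
rewrite ge0_fin_numE //; apply: (@le_lt_trans _ _ (A + Dsum (tni hp))).
  apply: leeDl; apply: esum_ge0 => yw _; apply: mule_ge0; first exact: G_ge0.
  by apply: mule_ge0; [exact: KE_ge0|rewrite lee_fin tni_ge0].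
rewrite -Yp -ge0_fin_numE; first by rewrite fin_numD /= (Dsum_fin (@tpi_ge0 _) tb_pp).
apply: adde_ge0; first by rewrite lee_fin hp_ge0.
apply: esum_ge0 => yw _; apply: mule_ge0; first exact: G_ge0.
by apply: mule_ge0; [exact: KE_ge0|rewrite lee_fin tpi_ge0].
Qed.

Lemma B_fin : B \is a fin_num.
Proof.
have B0 : 0 <= B by apply: esum_ge0 => x _; apply: mule_ge0; [exact: H_ge0|rewrite lee_fin hn_ge0].
rewrite ge0_fin_numE //; apply: (@le_lt_trans _ _ (B + Dsum (tni hn))).
  apply: leeDl; apply: esum_ge0 => yw _; apply: mule_ge0; first exact: G_ge0.
  by apply: mule_ge0; [exact: KE_ge0|rewrite lee_fin tni_ge0].
rewrite -Yn -ge0_fin_numE; first by rewrite fin_numD /= (Dsum_fin (@tpi_ge0 _) tb_np).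
apply: adde_ge0; first by rewrite lee_fin hn_ge0.
apply: esum_ge0 => yw _; apply: mule_ge0; first exact: G_ge0.
by apply: mule_ge0; [exact: KE_ge0|rewrite lee_fin tpi_ge0].
Qed.

Local Close Scope ereal_scope.
Lemma maxM (b c : R) : 0 <= c -> Num.max (b * c) 0 = c * Num.max b 0.
Proof.
move=> c0; mm; nra.
Qed.
Lemma maxMN (b c : R) : 0 <= c -> Num.max (- (b * c)) 0 = c * Num.max (- b) 0.
Proof. by move=> c0; rewrite -mulNr maxM. Qed.
Local Open Scope ereal_scope.

Definition Fp i := \esum_(ab in [set: int * int]) (Num.max ((ab.2)%:~R * law i ab) 0)%:E.
Definition Fm i := \esum_(ab in [set: int * int]) (Num.max (- ((ab.2)%:~R * law i ab)) 0)%:E.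
Definition X (t : nat * int -> nat * int -> R) y :=
  \esum_(w in [set: nat * int]) (K y w)%:E * (t y w)%:E.

Lemma X_ge0 t y : (forall y w, 0 <= t y w)%R -> 0 <= X t y.
Proof. by move=> t0; apply: esum_ge0 => w _; apply: mule_ge0; [exact: KE_ge0|rewrite lee_fin]. Qed.

Lemma Fp_K y : Fp y.1 = X (fun y w => Num.max ((w.2 - y.2)%:~R) 0)%R y.
Proof.
rewrite /X (K_reindex law_ge0 law_supp y (F := fun ab => (Num.max ((ab.2)%:~R : R) 0)%:E)); last first.
  by move=> ab; rewrite lee_fin; mm.
by apply: eq_esum => ab _; rewrite -EFinM maxM.
Qed.

Lemma Fm_K y : Fm y.1 = X (fun y w => Num.max (- (w.2 - y.2)%:~R) 0)%R y.
Proof.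
rewrite /X (K_reindex law_ge0 law_supp y (F := fun ab => (Num.max (- (ab.2)%:~R : R) 0)%:E)); last first.
  by move=> ab; rewrite lee_fin; mm.
by apply: eq_esum => ab _; rewrite -EFinM maxMN.
Qed.

Lemma Fp_ge0 i : 0 <= Fp i.
Proof. by apply: esum_ge0 => ab _; rewrite lee_fin; mm. Qed.
Lemma Fm_ge0 i : 0 <= Fm i.
Proof. by apply: esum_ge0 => ab _; rewrite lee_fin; mm. Qed.

Lemma Fp_le i : Fp i <= Cg%:E.
Proof.
apply: le_trans (law_abs i); apply: le_esum => ab _; rewrite -EFinM lee_fin maxM //.
apply: ler_wpM2l => //; have := ler_norm ((ab.2)%:~R : R); have := normr_ge0 ((ab.2)%:~R : R); mm.
Qed.
Lemma Fm_le i : Fm i <= Cg%:E.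
Proof.
apply: le_trans (law_abs i); apply: le_esum => ab _; rewrite -EFinM lee_fin maxMN //.
apply: ler_wpM2l => //; have := ler_norm (- (ab.2)%:~R : R); rewrite normrN.
have := normr_ge0 ((ab.2)%:~R : R); mm.
Qed.

Lemma Fp_fin i : Fp i \is a fin_num.
Proof. by rewrite ge0_fin_numE ?Fp_ge0 // (le_lt_trans (Fp_le i)) ?ltry. Qed.
Lemma Fm_fin i : Fm i \is a fin_num.
Proof. by rewrite ge0_fin_numE ?Fm_ge0 // (le_lt_trans (Fm_le i)) ?ltry. Qed.

Lemma maxr_ge0 (x : R) : (0 <= Num.max x 0)%R.
Proof. mm. Qed.
Lemma mx (x : R) : (Num.max x 0 - Num.max (- x) 0 = x)%R.
Proof. mm. Qed.
Lemma mx2 (x y : R) : (Num.max (x - y) 0 - Num.max (y - x) 0 = x - y)%R.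
Proof. mm. Qed.

Definition GFp := \esum_(y in [set: nat * int]) G y * Fp y.1.
Definition GFm := \esum_(y in [set: nat * int]) G y * Fm y.1.

Lemma ident3 : Dsum (tpi hp) + Dsum (tni hn) + GFm = Dsum (tni hp) + Dsum (tpi hn) + GFp.
Proof.
rewrite !(Dsum_split law_ge0); try exact: tpi_ge0; try exact: tni_ge0.
have P y : [/\ 0 <= G y, 0 <= X (tpi hp) y, 0 <= X (tni hp) y, 0 <= X (tpi hn) y &
    [/\ 0 <= X (tni hn) y, 0 <= Fp y.1 & 0 <= Fm y.1]].
  split; [exact: G_ge0|exact: X_ge0 (@tpi_ge0 _)|exact: X_ge0 (@tni_ge0 _)|exact: X_ge0 (@tpi_ge0 _)|].
  by split; [exact: X_ge0 (@tni_ge0 _)|exact: Fp_ge0|exact: Fm_ge0].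
rewrite /GFp /GFm -!esumD; try by move=> y _; have [? ? ? ? [? ? ?]] := P y;
  rewrite ?adde_ge0 // ?mule_ge0 // ?adde_ge0 // ?mule_ge0.
apply: eq_esum => y _; have [? ? ? ? [? ? ?]] := P y.
rewrite -!ge0_muleDr ?adde_ge0 //; congr (_ * _).
have Q w : [/\ 0 <= (K y w)%:E, 0 <= (tpi hp y w)%:E, 0 <= (tni hp y w)%:E, 0 <= (tpi hn y w)%:E &
    [/\ 0 <= (tni hn y w)%:E, 0 <= (Num.max ((w.2 - y.2)%:~R : R) 0)%:E & 0 <= (Num.max (- ((w.2 - y.2)%:~R : R)) 0)%:E]].
  by split; rewrite ?lee_fin ?K_ge0 ?tpi_ge0 ?tni_ge0 //; split; rewrite lee_fin maxr_ge0.
rewrite Fp_K Fm_K /X -!esumD; try by move=> w _; have [? ? ? ? [? ? ?]] := Q w;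
  rewrite ?adde_ge0 // ?mule_ge0 // ?adde_ge0 // ?mule_ge0.
apply: eq_esum => w _; rewrite -!EFinM -!EFinD -!mulrDr; congr (_ * _)%:E.
rewrite /tpi /tni intrB; set a := ((w.2)%:~R : R); set b := ((y.2)%:~R : R).
have e1 := mx2 (hp w) (hp y); have e2 := mx2 (hn w) (hn y); have e3 := mx (a - b).
have e4 : (hp w - hn w = a)%R by rewrite /hp /hn mx.
have e5 : (hp y - hn y = b)%R by rewrite /hp /hn mx.
lra.
Qed.

Local Notation lam := (lam pi k).
Local Notation nu_eq := (nu_eq law_ge0 law_sum1 law_supp pi_ge0 pi_sum1 pi_inv irr k l).

Definition SPp := \esum_(i in [set: nat]) (pi i)%:E * Fp i.
Definition SPm := \esum_(i in [set: nat]) (pi i)%:E * Fm i.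

Lemma GF_eq (F : nat -> \bar R) : (forall i, 0 <= F i) ->
  \esum_(y in [set: nat * int]) G y * F y.1 =
  (\esum_(i in [set: nat]) (pi i)%:E * F i) * ((pi k)^-1)%:E.
Proof.
move=> F0; rewrite (sumG_fun1 law_ge0) //; under eq_esum do rewrite nu_eq.
rewrite -esumZr; last by move=> i; apply: mule_ge0 => //; rewrite lee_fin.
  by apply: eq_esum => i _; rewrite /M_E.lam EFinM muleAC.
by rewrite lee_fin invr_ge0.
Qed.

Lemma SP_le (F : nat -> \bar R) : (forall i, 0 <= F i) -> (forall i, F i <= Cg%:E) ->
  \esum_(i in [set: nat]) (pi i)%:E * F i <= Cg%:E.
Proof.
move=> F0 FC; apply: (@le_trans _ _ (\esum_(i in [set: nat]) (pi i)%:E * Cg%:E)).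
  by apply: le_esum => i _; apply: lee_wpmul2l; rewrite ?lee_fin.
by rewrite esumZr ?pi_sum1 ?mul1e // ?lee_fin ?Cg_ge0.
Qed.

Lemma SP_fin (F : nat -> \bar R) : (forall i, 0 <= F i) -> (forall i, F i <= Cg%:E) ->
  (\esum_(i in [set: nat]) (pi i)%:E * F i) \is a fin_num.
Proof.
move=> F0 FC; rewrite ge0_fin_numE; last by apply: esum_ge0 => i _; apply: mule_ge0; rewrite ?lee_fin.
exact: (le_lt_trans (SP_le F0 FC) (ltry _)).
Qed.

Lemma e_eq i : fine (EY1 k0 mu mu'' i) = (fine (Fp i) - fine (Fm i))%R.
Proof.
have -> : EY1 k0 mu mu'' i = Fp i - Fm i by [].
by rewrite -(fineK (Fp_fin i)) -(fineK (Fm_fin i)).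
Qed.

Lemma V1_eq : V1 k0 mu mu'' pi = (fine SPp - fine SPm)%R.
Proof.
pose e := fun i => fine (EY1 k0 mu mu'' i).
pose SP := \esum_(i in [set: nat]) (Num.max (pi i * e i) 0)%:E.
pose SN := \esum_(i in [set: nat]) (Num.max (- (pi i * e i)) 0)%:E.
have -> : V1 k0 mu mu'' pi = fine (SP - SN) by [].
have Fpf := Fp_fin; have Fmf := Fm_fin.
have hsum : SP + SPm = SN + SPp.
  have h1 i : 0 <= (Num.max (pi i * e i) 0)%:E by rewrite lee_fin maxr_ge0.
  have h2 i : 0 <= (Num.max (- (pi i * e i)) 0)%:E by rewrite lee_fin maxr_ge0.
  have h3 i : 0 <= (pi i)%:E * Fp i by apply: mule_ge0; [rewrite lee_fin|exact: Fp_ge0].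
  have h4 i : 0 <= (pi i)%:E * Fm i by apply: mule_ge0; [rewrite lee_fin|exact: Fm_ge0].
  rewrite /SP /SN /SPm /SPp -(esumD (fun i _ => h1 i) (fun i _ => h4 i)).
  rewrite -(esumD (fun i _ => h2 i) (fun i _ => h3 i)).
  apply: eq_esum => i _; rewrite -(fineK (Fpf i)) -(fineK (Fmf i)) -!EFinM -!EFinD.
  congr EFin; rewrite /e e_eq; have := mx (pi i * (fine (Fp i) - fine (Fm i))).
  rewrite mulrBr => ?; lra.
have SPle : SP <= SPp.
  apply: le_esum => i _; rewrite -(fineK (Fpf i)) -EFinM lee_fin /e e_eq.
  have := Fp_ge0 i; have := Fm_ge0 i.
  rewrite -(fineK (Fpf i)) -(fineK (Fmf i)) !lee_fin => h1 h2.
  have := mulr_ge0 (pi_ge0 i) h1; have := mulr_ge0 (pi_ge0 i) h2; rewrite mulrBr; mm.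
have SNle : SN <= SPm.
  apply: le_esum => i _; rewrite -(fineK (Fmf i)) -EFinM lee_fin /e e_eq.
  have := Fp_ge0 i; have := Fm_ge0 i.
  rewrite -(fineK (Fpf i)) -(fineK (Fmf i)) !lee_fin => h1 h2.
  have := mulr_ge0 (pi_ge0 i) h1; have := mulr_ge0 (pi_ge0 i) h2; rewrite mulrBr; mm.
have fPp : SPp \is a fin_num by apply: SP_fin; [exact: Fp_ge0|exact: Fp_le].
have fPm : SPm \is a fin_num by apply: SP_fin; [exact: Fm_ge0|exact: Fm_le].
have fP : SP \is a fin_num.
  rewrite ge0_fin_numE; last by apply: esum_ge0 => i _; rewrite lee_fin maxr_ge0.
  by apply: (le_lt_trans SPle); rewrite -ge0_fin_numE // -(fineK fPp) lee_fin; 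
     apply: fine_ge0; apply: esum_ge0 => i _; apply: mule_ge0; [rewrite lee_fin|exact: Fp_ge0].
have fN : SN \is a fin_num.
  rewrite ge0_fin_numE; last by apply: esum_ge0 => i _; rewrite lee_fin maxr_ge0.
  by apply: (le_lt_trans SNle); rewrite -ge0_fin_numE // -(fineK fPm) lee_fin; 
     apply: fine_ge0; apply: esum_ge0 => i _; apply: mule_ge0; [rewrite lee_fin|exact: Fm_ge0].
have := congr1 fine hsum; rewrite (fineD fP fPm) (fineD fN fPp) => h.
rewrite (fineB fP fN); lra.
Qed.

Lemma norm_split (x : R) : (`|x| = Num.max x 0 + Num.max (- x) 0)%R.
Proof. have [h|h] := leP 0%R x; [rewrite ger0_norm //|rewrite ltr0_norm //]; mm. Qed.

Lemma PT1 : P_T1_finite k0 mu mu'' k l = 1.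
Proof.
have := hit_sum law_ge0 k l (c := fun _ => 1) (fun _ => lee01).
under eq_esum do rewrite mule1.
under [X in _ = X -> _]eq_esum do rewrite mule1.
move=> e; rewrite /P_T1_finite e.
exact: (sumH1 law_ge0 law_sum1 law_supp pi_ge0 pi_sum1 pi_inv irr k l).
Qed.

Lemma EabsT1 : EabsY_T1 k0 mu mu'' k l = A + B.
Proof.
have := hit_sum law_ge0 k l (c := fun x => (`|(x.2)%:~R : R|)%:E) (fun _ => normr_ge0 _).
move=> e; rewrite /EabsY_T1 e /A /B -esumD; first last.
- by move=> x _; apply: mule_ge0; [exact: H_ge0|rewrite lee_fin hn_ge0].
- by move=> x _; apply: mule_ge0; [exact: H_ge0|rewrite lee_fin hp_ge0].
apply: eq_esum => x _; rewrite -ge0_muleDr ?lee_fin ?hp_ge0 ?hn_ge0 //.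
by rewrite norm_split.
Qed.

Lemma EabsT1_fin : EabsY_T1 k0 mu mu'' k l < +oo.
Proof.
rewrite EabsT1 ltey_eq fin_numD A_fin B_fin //.
Qed.

Lemma EYT1 : EY_T1 k0 mu mu'' k l = ((l%:~R : R) + V1 k0 mu mu'' pi / pi k)%:E.
Proof.
have hA := hit_sum law_ge0 k l (c := fun x => (hp x)%:E) (fun x => hp_ge0 x).
have hB := hit_sum law_ge0 k l (c := fun x => (hn x)%:E) (fun x => hn_ge0 x).
have -> : EY_T1 k0 mu mu'' k l = A - B by rewrite /EY_T1 /A /B -hA -hB.
have fd1 := Dsum_fin (@tpi_ge0 hp) tb_pp.
have fd2 := Dsum_fin (@tni_ge0 hp) tb_pn.
have fd3 := Dsum_fin (@tpi_ge0 hn) tb_np.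
have fd4 := Dsum_fin (@tni_ge0 hn) tb_nn.
have fPp : SPp \is a fin_num by apply: SP_fin; [exact: Fp_ge0|exact: Fp_le].
have fPm : SPm \is a fin_num by apply: SP_fin; [exact: Fm_ge0|exact: Fm_le].
have gp := GF_eq Fp_ge0; have gm := GF_eq Fm_ge0.
rewrite -/SPp in gp; rewrite -/SPm in gm.
rewrite -/GFp in gp; rewrite -/GFm in gm.
have fgp : GFp \is a fin_num by rewrite gp fin_numM.
have fgm : GFm \is a fin_num by rewrite gm fin_numM.
have y1 := Yp; have y2 := Yn; have i3 := ident3.
rewrite -(fineK A_fin) -(fineK fd1) -(fineK fd2) -!EFinD in y1.
rewrite -(fineK B_fin) -(fineK fd3) -(fineK fd4) -!EFinD in y2.
rewrite -(fineK fd1) -(fineK fd2) -(fineK fd3) -(fineK fd4) -(fineK fgp) -(fineK fgm) -!EFinD in i3.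
rewrite -(fineK fPp) -EFinM in gp; rewrite -(fineK fPm) -EFinM in gm.
case: y1 => y1; case: y2 => y2; case: i3 => i3.
have gp' : fine GFp = (fine SPp / pi k)%R by rewrite gp.
have gm' : fine GFm = (fine SPm / pi k)%R by rewrite gm.
rewrite -(fineK A_fin) -(fineK B_fin) -EFinB; congr EFin.
rewrite V1_eq mulrBl.
have e0 : (hp (k, l) - hn (k, l) = l%:~R)%R by rewrite /hp /hn mx.
lra.
Qed.

Lemma EabsY1_eq i : EabsY1 k0 mu mu'' i =
  \esum_(ab in [set: int * int]) (law i ab)%:E * (`|(ab.2)%:~R : R|)%:E.
Proof.
rewrite /EabsY1 /dabs; apply: eq_esum => ab _.
by rewrite -EFinM normrM (ger0_norm (law_ge0 i ab)) mulrC.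
Qed.

Lemma EabsY1_le i : EabsY1 k0 mu mu'' i <= Cg%:E.
Proof. by rewrite EabsY1_eq. Qed.

Lemma EabsY1_ge0 i : 0 <= EabsY1 k0 mu mu'' i.
Proof. by apply: esum_ge0 => ab _; rewrite lee_fin. Qed.

Lemma conj1 : (forall i : nat, EabsY1 k0 mu mu'' i < +oo) /\
   \esum_(i in [set: nat]) (pi i)%:E * EabsY1 k0 mu mu'' i < +oo.
Proof.
split; first by move=> i; exact: (le_lt_trans (EabsY1_le i) (ltry _)).
exact: (le_lt_trans (SP_le EabsY1_ge0 EabsY1_le) (ltry _)).
Qed.

End final.

End M_G.
Import M_G.

Module M_H0.
Set Implicit Arguments.
Unset Strict Implicit.
Unset Printing Implicit Defensive.
Import Order.TTheory GRing.Theory Num.Theory.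
Local Open Scope ring_scope.

Lemma bbound {R : realType} (d g : R) (K0 : nat) (a b : int) : 0 < d -> 0 < g ->
  - (K0%:Z) <= a -> - (K0%:Z) <= b ->
  `|(b%:~R : R)| <= K0%:R + expR (d * K0%:R) / g * expR (d * a%:~R + g * b%:~R).
Proof.
move=> d0 g0 ha hb.
have hA : - (K0%:R) <= (a%:~R : R) by rewrite -[K0%:R]/(K0%:Z%:~R : R) -mulrNz ler_int.
have hB : - (K0%:R) <= (b%:~R : R) by rewrite -[K0%:R]/(K0%:Z%:~R : R) -mulrNz ler_int.
set A := (a%:~R : R) in hA *; set B := (b%:~R : R) in hB *; set k := (K0%:R : R) in hA hB *.
have k0 : 0 <= k by rewrite /k.
have E0 : 0 <= expR (d * k) / g * expR (d * A + g * B).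
  by rewrite mulr_ge0 ?divr_ge0 ?expR_ge0 // ltW.
have [Bk|Bk] := leP B k.
  have : `|B| <= k by rewrite ler_norml; apply/andP; split; lra.
  lra.
rewrite ger0_norm; last lra.
suff : B <= expR (d * k) / g * expR (d * A + g * B) by lra.
rewrite mulrAC ler_pdivlMr // mulrC -expRD.
apply: (@le_trans _ _ (expR (g * B))).
  by have := expR_ge1Dx (g * B); lra.
rewrite ler_expR; have hk : 0 <= d * (k + A) by apply: mulr_ge0; lra.
rewrite mulrDr in hk; lra.
Qed.

End M_H0.
Import M_H0.

Local Open Scope classical_set_scope.
Local Open Scope ring_scope.

Theorem lemmaA1 (R : realType) (k0 : nat)
  (mu : int * int -> R) (mu' : nat -> int * int -> R)
  (mu'' : nat -> int * int -> R) (muij : nat -> nat -> int * int -> R)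
  (pi1 : nat -> R) :
  (0 < k0)%N ->
  (* probability measures *)
  is_distr mu ->
  (forall j, (j < k0)%N -> is_distr (mu' j)) ->
  (forall i, (i < k0)%N -> is_distr (mu'' i)) ->
  (forall i j, (i < k0)%N -> (j < k0)%N -> is_distr (muij i j)) ->
  (* (A1) *)
  (forall a b : int, (a < - k0%:Z \/ b < - k0%:Z) -> mu (a, b) = 0) ->
  (forall j : nat, (j < k0)%N -> forall a b : int,
      (a < - k0%:Z \/ b < - j%:Z) -> mu' j (a, b) = 0) ->
  (forall i : nat, (i < k0)%N -> forall a b : int,
      (b < - k0%:Z \/ a < - i%:Z) -> mu'' i (a, b) = 0) ->
  (forall i j : nat, (i < k0)%N -> (j < k0)%N -> forall a b : int,
      (a < - i%:Z \/ b < - j%:Z) -> muij i j (a, b) = 0) ->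
  (* (A2) *)
  (exists delta gamma C : R, 0 < delta /\ 0 < gamma /\ 0 < C /\
     forall i j : nat,
       (\esum_(ab in [set: int * int])
          (lawZ k0 mu mu' mu'' muij i j ab *
             expR (delta * ab.1%:~R + gamma * ab.2%:~R))%:E <= C%:E)%E) ->
  (* (A3) *)
  irreducible (kernel0 mu) ->
  irreducible (kernel1 k0 mu mu'') ->
  irreducible (kernel2 k0 mu mu') ->
  irreducible (kernelZ k0 mu mu' mu'' muij) ->
  (* m_1 < 0 *)
  (m1 mu < 0)%E ->
  (* pi_1 is the invariant distribution of X_1 *)
  invariant_X1 k0 mu mu'' pi1 ->
  (* V_1 is well defined *)
  ((forall i : nat, (EabsY1 k0 mu mu'' i < +oo)%E) /\
   (\esum_(i in [set: nat]) (pi1 i)%:E * EabsY1 k0 mu mu'' i < +oo)%E) /\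
  (* for every (k, l), Y_1(T_1(k)) is integrable with the given mean *)
  (forall (k : nat) (l : int),
     P_T1_finite k0 mu mu'' k l = 1%E /\
     (EabsY_T1 k0 mu mu'' k l < +oo)%E /\
     EY_T1 k0 mu mu'' k l = (l%:~R + V1 k0 mu mu'' pi1 / pi1 k)%:E).
Proof.
move=> k0pos Hmu Hmu' Hmu'' Hmuij A1mu A1mu' A1mu'' A1muij
  [d [g [C [d0 [g0 [C0 A2]]]]]] irr0 irr1 irr2 irrZ m1neg [[pi_ge0 pi_sum1] pi_inv].
have law_ge0 : forall i ab, 0 <= law1 k0 mu mu'' i ab.
  move=> i ab; rewrite /law1; case: ifP => hi; first exact: Hmu.1.
  by apply: (Hmu'' i _).1; rewrite ltnNge hi.
have law_sum1 : forall i, (\esum_(ab in [set: int * int]) (law1 k0 mu mu'' i ab)%:E = 1)%E.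
  move=> i; rewrite /law1; case: ifP => hi; first exact: Hmu.2.
  by apply: (Hmu'' i _).2; rewrite ltnNge hi.
have law_supp : forall i (a b : int), a < - (i%:Z) -> law1 k0 mu mu'' i (a, b) = 0.
  move=> i a b hab; rewrite /law1; case: ifP => hi.
    by apply: A1mu; left; lia.
  by apply: A1mu''; [rewrite ltnNge hi|right].
have supp : forall i (a b : int), law1 k0 mu mu'' i (a, b) != 0 ->
    - (k0%:Z) <= a /\ - (k0%:Z) <= b.
  move=> i a b; rewrite /law1; case: ifP => hi hne.
    split; rewrite leNgt; apply/negP => h; move/eqP: hne; apply; apply: A1mu; by [left|right].
  have ik : (i < k0)%N by rewrite ltnNge hi.
  split; rewrite leNgt; apply/negP => h; move/eqP: hne; apply; apply: A1mu'' => //.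
    by right; lia.
  by left.
pose Cg := k0%:R + expR (d * k0%:R) / g * C.
have law_abs : forall i, (\esum_(ab in [set: int * int]) (law1 k0 mu mu'' i ab)%:E *
    (`|(ab.2)%:~R : R|)%:E <= Cg%:E)%E.
  move=> i.
  have eZ : lawZ k0 mu mu' mu'' muij i k0 = law1 k0 mu mu'' i.
    by rewrite /lawZ /law1 leqnn; case: ifP.
  have A2i := A2 i k0; rewrite eZ in A2i.
  pose c := expR (d * k0%:R) / g.
  have c0 : 0 <= c by rewrite /c divr_ge0 ?expR_ge0 // ltW.
  apply: (@le_trans _ _ (\esum_(ab in [set: int * int])
      ((k0%:R)%:E * (law1 k0 mu mu'' i ab)%:E +
       c%:E * (law1 k0 mu mu'' i ab * expR (d * ab.1%:~R + g * ab.2%:~R))%:E))%E).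
    apply: le_esum => -[a b] _; rewrite -!EFinM -EFinD lee_fin /=.
    have [z|nz] := eqVneq (law1 k0 mu mu'' i (a, b)) 0.
      by rewrite z !(mul0r, mulr0) addr0.
    have [ha hb] := supp i a b nz.
    have := bbound d0 g0 ha hb; rewrite -/c => hbb.
    have lg := law_ge0 i (a, b).
    set L := law1 k0 mu mu'' i (a, b) in lg *.
    set E := expR _ in hbb *.
    have -> : k0%:R * L + c * (L * E) = L * (k0%:R + c * E) by ring.
    exact: ler_wpM2l.
  have p1 ab : (0 <= (k0%:R)%:E * (law1 k0 mu mu'' i ab)%:E)%E by apply: mule_ge0; rewrite lee_fin.
  have p2 ab : (0 <= c%:E * (law1 k0 mu mu'' i ab * expR (d * ab.1%:~R + g * ab.2%:~R))%:E)%E.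
    by apply: mule_ge0; rewrite lee_fin // mulr_ge0 // expR_ge0.
  rewrite (esumD (fun ab _ => p1 ab) (fun ab _ => p2 ab)).
  rewrite !esumZl_fin //; try by move=> ab; rewrite lee_fin ?mulr_ge0 ?expR_ge0.
  rewrite law_sum1 mule1 /Cg EFinD leeD2l //.
  apply: (le_trans (lee_wpmul2l _ A2i)); first by rewrite lee_fin.
  by rewrite -EFinM.
split.
  exact: (conj1 law_ge0 pi_ge0 pi_sum1 law_abs).
move=> k l; split; [|split].
- exact: (PT1 law_ge0 law_sum1 law_supp pi_ge0 pi_sum1 pi_inv irr1).
- exact: (EabsT1_fin law_ge0 law_sum1 law_supp pi_ge0 pi_sum1 pi_inv irr1 law_abs).
- exact: (EYT1 law_ge0 law_sum1 law_supp pi_ge0 pi_sum1 pi_inv irr1 law_abs).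
Qed.
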